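(* Let $G$ be an abelian Hausdorff topological group and let $A$ be an infinite absolutely Cauchy summable subset of $G$ such that the cyclic subgroup $\langle a\rangle$ is discrete (in the subspace topology) for every $a\in A$. Then $A$ contains an infinite topologically independent subset.
   Context: $A\subseteq G$ is absolutely Cauchy summable if for every neighbourhood $U$ of $0$ there is a finite $F\subseteq A$ such that the subgroup $\langle A\setminus F\rangle$ generated by $A\setminus F$ is contained in $U$. A subset $B\subseteq G$ is topologically independent if $0\notin B$ and for every neighbourhood $W$ of $0$ there is a neighbourhood $U$ of $0$ such that for every finite $F\subseteq B$ and all integers $\{z_a:a\in F\}$, $\sum_{a\in F}z_aa\in U$ implies $z_aa\in W$ for all $a\in F$. *)

(* Defs.v *)
From HB Require Import structures.
From mathcomp Require Import all_boot all_order all_algebra.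
From mathcomp Require Import all_classical all_reals all_analysis.
Set Implicit Arguments. Unset Strict Implicit. Unset Printing Implicit Defensive.
Import Order.TTheory GRing.Theory Num.Theory.
Local Open Scope classical_set_scope.
Local Open Scope ring_scope.

(* Abelian topological groups are MathComp-Analysis' [topologicalZmodType]
   (zmodType + topology with continuous addition and opposite). *)

Definition gen_subgroup (G : zmodType) (S : set G) : set G :=
  [set x | exists (s : seq G) (z : G -> int),
      (forall a, a \in s -> S a) /\ x = \sum_(a <- s) a *~ z a].

Definition cyclic_subgroup (G : zmodType) (a : G) : set G :=
  [set x | exists n : int, x = a *~ n].

Definition discrete_subset (G : topologicalType) (C : set G) : Prop :=
  forall x, C x -> exists U, nbhs x U /\ U `&` C = [set x].

Definition abs_cauchy_summable (G : topologicalZmodType) (A : set G) : Prop :=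
  forall U : set G, nbhs (0 : G) U ->
    exists F : set G, [/\ finite_set F, F `<=` A &
      gen_subgroup (A `\` F) `<=` U].

(* Finite subsets F of B are represented by duplicate-free sequences. *)
Definition top_independent (G : topologicalZmodType) (B : set G) : Prop :=
  ~ B 0 /\
  forall W : set G, nbhs (0 : G) W ->
    exists U : set G, nbhs (0 : G) U /\
      forall (F : seq G) (z : G -> int),
        uniq F -> (forall a, a \in F -> B a) ->
        U (\sum_(a <- F) a *~ z a) ->
        forall a, a \in F -> W (a *~ z a).

(* Main.v *)
Require Import Defs.
From HB Require Import structures.
From mathcomp Require Import all_boot all_order all_algebra.
From mathcomp Require Import all_classical all_reals all_analysis.
Import Order.TTheory GRing.Theory Num.Theory.
Local Open Scope classical_set_scope.
Local Open Scope ring_scope.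

Lemma nbhs_sub (G : topologicalZmodType) (V : set G) : nbhs (0:G) V ->
  exists U : set G, nbhs (0:G) U /\ forall x y, U x -> U y -> V (x - y).
Proof.
move=> hV.
have := @sub_continuous G (0,0) V.
rewrite /= subr0 => /(_ hV).
case => -[P Q] /= [nP nQ] PQ.
exists (P `&` Q); split; first exact: filterI.
by move=> x y [Px _] [_ Qy]; apply: (PQ (x,y)).
Qed.
Lemma step_ex (G : topologicalZmodType) (A : set G) :
  infinite_set A -> abs_cauchy_summable A ->
  (forall a, A a -> discrete_subset (cyclic_subgroup a)) ->
  forall (E P : set G), finite_set E -> nbhs (0:G) P ->
  exists (a : G) (U F : set G), [/\ A a /\ a != 0 /\ ~ E a,
    nbhs (0:G) U /\ U `<=` P,
    (forall x r z, U x -> U r -> x - r = a *~ z -> a *~ z = 0),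
    finite_set F /\ F `<=` A & gen_subgroup (A `\` F) `<=` U].
Proof.
move=> hinf hacs hdisc E P finE nP.
have hinf' : infinite_set (A `\` (E `|` [set 0])).
  apply: infinite_setD => //; rewrite finite_setU; split => //.
have [[a [Aa naE]]|hne] := pselect (exists a, (A `\` (E `|` [set 0])) a); last first.
  exfalso; apply: hinf'.
  suff -> : A `\` (E `|` [set 0]) = set0 by exact: finite_set0.
  by apply/seteqP; split => x // hx; apply: hne; exists x.
have a0 : a != 0 by apply/eqP => a0; apply: naE; right.
have nEa : ~ E a by move=> ?; apply: naE; left.
have [V [nV hV]] := hdisc a Aa 0 (ex_intro _ 0%R (esym (mulr0z a))).
have [U [nU hU]] := @nbhs_sub G _ (filterI nV nP).
have [F [finF FA hF]] := hacs U nU.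
exists a, U, F; split => //.
- split => // x Ux.
  have := hU x 0 Ux (nbhs_singleton nU); rewrite subr0; by case.
- move=> x r z Ux Ur exr.
  have : (V `&` cyclic_subgroup a) (a *~ z).
    split; last by exists z.
    by rewrite -exr; case: (hU x r Ux Ur).
  by rewrite hV => ->.
Qed.

Lemma construct (G : topologicalZmodType) (A : set G) :
  (forall (E P : set G), finite_set E -> nbhs (0:G) P ->
  exists (a : G) (U F : set G), [/\ A a /\ a != 0 /\ ~ E a,
    nbhs (0:G) U /\ U `<=` P,
    (forall x r z, U x -> U r -> x - r = a *~ z -> a *~ z = 0),
    finite_set F /\ F `<=` A & gen_subgroup (A `\` F) `<=` U]) ->
  exists (a : nat -> G) (U F : nat -> set G),
    [/\ (forall n, (A (a n) /\ a n != 0) /\ nbhs (0:G) (U n)),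
        (forall n x r z, U n x -> U n r -> x - r = a n *~ z -> a n *~ z = 0),
        (forall k j, (k <= j)%N -> (U j `<=` U k)),
        (forall k j, (k < j)%N -> ~ F k (a j) /\ a j != a k)
      & (forall n, F n `<=` A /\ gen_subgroup (A `\` F n) `<=` U n)].
Proof.
move=> hstep.
have [f hf] : {f : set G * set G -> G * set G * set G & forall EP,
   finite_set EP.1 -> nbhs (0:G) EP.2 ->
   [/\ A (f EP).1.1 /\ (f EP).1.1 != 0 /\ ~ EP.1 (f EP).1.1,
    nbhs (0:G) (f EP).1.2 /\ (f EP).1.2 `<=` EP.2,
    (forall x r z, (f EP).1.2 x -> (f EP).1.2 r -> x - r = (f EP).1.1 *~ z -> (f EP).1.1 *~ z = 0),
    finite_set (f EP).2 /\ (f EP).2 `<=` A & gen_subgroup (A `\` (f EP).2) `<=` (f EP).1.2]}.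
  apply: (@choice _ _ (fun EP y => finite_set EP.1 -> nbhs (0:G) EP.2 ->
   [/\ A y.1.1 /\ y.1.1 != 0 /\ ~ EP.1 y.1.1,
    nbhs (0:G) y.1.2 /\ y.1.2 `<=` EP.2,
    (forall x r z, y.1.2 x -> y.1.2 r -> x - r = y.1.1 *~ z -> y.1.1 *~ z = 0),
    finite_set y.2 /\ y.2 `<=` A & gen_subgroup (A `\` y.2) `<=` y.1.2])) => -[E P].
  have [[fE nP]|hno] := pselect (finite_set E /\ nbhs (0:G) P).
    have [a [U [F hh]]] := hstep E P fE nP.
    by exists (a, U, F).
  by exists (0, set0, set0) => fE nP; exfalso; apply: hno.
pose st := fix st n := if n is m.+1 then
   ((st m).1 `|` (f (st m)).2 `|` [set (f (st m)).1.1], (f (st m)).1.2)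
   else (set0, setT).
have stS n : st n.+1 = ((st n).1 `|` (f (st n)).2 `|` [set (f (st n)).1.1], (f (st n)).1.2) by [].
have good n : finite_set (st n).1 /\ nbhs (0:G) (st n).2.
  elim: n => [|n [fE nP]]; first by split; [exact: finite_set0 | exact: filterT].
  have [_ [nU _] _ [fF _] _] := hf _ fE nP.
  rewrite stS /=; split => //.
  rewrite !finite_setU; split; last exact: finite_set1.
  by split.
have spec n := hf (st n) (good n).1 (good n).2.
have Emono k j : (k <= j)%N -> (st k).1 `<=` (st j).1.
  move=> /subnK <-; elim: (j - k)%N => [|d IH] //.
  rewrite addSn stS /= => x hx; left; left; exact: IH.
have Umono k j : (k <= j)%N -> (f (st j)).1.2 `<=` (f (st k)).1.2.
  move=> /subnK <-; elim: (j - k)%N => [|d IH] //.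
  rewrite addSn => x hx; apply: IH.
  have [_ [_ sub] _ _ _] := spec (d + k)%N.
  have [_ [_ sub'] _ _ _] := spec (d + k).+1%N.
  exact: (sub' x hx).
exists (fun n => (f (st n)).1.1), (fun n => (f (st n)).1.2), (fun n => (f (st n)).2).
split.
- by move=> n; have [[? [? _]] [? _] _ _ _] := spec n.
- by move=> n; have [_ _ ? _ _] := spec n.
- exact: Umono.
- move=> k j kj.
  have [[_ [_ nE]] _ _ _ _] := spec j.
  have hsub := Emono _ _ kj.
  split.
    by move=> hF; apply: nE; apply: hsub; rewrite stS /=; left; right.
  by apply/eqP => he; apply: nE; apply: hsub; rewrite stS /=; right; rewrite he.
- by move=> n; have [_ _ _ [_ ?] ?] := spec n.
Qed.
Lemma key (G : topologicalZmodType) (A : set G) (a : nat -> G) (U F : nat -> set G) :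
 (forall n x r z, U n x -> U n r -> x - r = a n *~ z -> a n *~ z = 0) ->
 (forall k j, (k <= j)%N -> U j `<=` U k) ->
 (forall k j, (k < j)%N -> ~ F k (a j) /\ a j != a k) ->
 (forall n, A (a n)) ->
 (forall n, gen_subgroup (A `\` F n) `<=` U n) ->
 forall (L : seq G) (z : G -> int) M, uniq L ->
 (forall x, x \in L -> exists n, x = a n) ->
 U M (\sum_(x <- L) x *~ z x) ->
 forall j, (j <= M)%N -> a j \in L -> a j *~ z (a j) = 0.
Proof.
move=> hd hU hsep hA hgen L z M uL hL hS.
elim/ltn_ind => j IH jM ajL.
pose P x := `[< exists i, (i < j)%N /\ x = a i >].
have e1 : \sum_(x <- L) x *~ z x =
    a j *~ z (a j) + \sum_(x <- L | (x != a j) && ~~ P x) x *~ z x.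
  rewrite (bigD1_seq (a j)) //=; congr (_ + _).
  rewrite (bigID P) /= big1_seq ?add0r //.
  move=> x /andP [/andP [_ /asboolP [i [ij ->]]] xL].
  exact: IH ij (leq_trans (ltnW ij) jM) xL.
pose R := \sum_(x <- L | (x != a j) && ~~ P x) x *~ z x.
rewrite -/R in e1.
have UR : U j R.
  apply: (hgen j); exists [seq x <- L | (x != a j) && ~~ P x], z.
  split; last by rewrite big_filter.
  move=> x; rewrite mem_filter => /andP [/andP [xj nP] xL].
  have [n xn] := hL x xL; rewrite xn in xj nP *.
  split; first exact: hA.
  case: (ltngtP n j) => [nj|jn|nj].
  - by exfalso; move/asboolPn: nP; apply; exists n.
  - by have [] := hsep j n jn.
  - by move: xj; rewrite nj eqxx.
apply: (hd j (\sum_(x <- L) x *~ z x) R) => //.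
  exact: hU jM _ hS.
by rewrite e1 addrK.
Qed.

Lemma nat_bound (s : seq nat) : exists N, forall k, k \in s -> (k < N)%N.
Proof.
elim: s => [|x s [N hN]]; first by exists 0%N.
exists (maxn x.+1 N) => k; rewrite inE => /orP [/eqP ->|ks].
  by rewrite leq_max leqnn.
by rewrite leq_max hN ?orbT.
Qed.

Theorem theorem5p4 (G : topologicalZmodType) (A : set G) :
  hausdorff_space G ->
  infinite_set A ->
  abs_cauchy_summable A ->
  (forall a, A a -> discrete_subset (cyclic_subgroup a)) ->
  exists B : set G, [/\ B `<=` A, infinite_set B & top_independent B].
Proof.
move=> _ hinf hacs hdisc.
have [a [U [F [h1 hd hU hsep hF]]]] := @construct G A (@step_ex G A hinf hacs hdisc).
have hA n : A (a n) by exact: (h1 n).1.1.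
have hgen n : gen_subgroup (A `\` F n) `<=` U n by exact: (hF n).2.
have ainj : injective a.
  move=> i j e; case: (ltngtP i j) => // ij.
    by have [_ /eqP] := hsep _ _ ij; rewrite e.
  by have [_ /eqP] := hsep _ _ ij; rewrite e.
exists (range a); split.
- by move=> _ [n _ <-]; exact: hA.
- move=> fin; apply: infinite_nat.
  have : finite_set (a @^-1` range a).
    by apply: finite_preimage => // x y _ _ /ainj.
  suff -> : a @^-1` range a = [set: nat] by [].
  by apply/seteqP; split => // n _; exists n.
- split.
    by move=> [n _ an0]; have := (h1 n).1.2; rewrite an0 eqxx.
  move=> W nW.
  have [F0 [finF0 _ hF0]] := hacs W nW.
  have fK : finite_set (a @^-1` F0).
    by apply: finite_preimage => // x y _ _ /ainj.
  have [s es] := (finite_seqP _).1 fK.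
  have [N hN] := nat_bound s.
  exists (U N); split; first exact: (h1 N).2.
  move=> L z uL hLB hS x xL.
  have [n _ xn] := hLB x xL; subst x.
  have hL y : y \in L -> exists n, y = a n.
    by move=> /hLB [m _ <-]; exists m.
  have [Fan|nFan] := pselect (F0 (a n)).
    have nN : (n < N)%N.
      apply: hN; have : [set` s] n by rewrite -es.
      by [].
    rewrite (@key G A a U F hd hU hsep hA hgen L z N uL hL hS n (ltnW nN) xL).
    exact: nbhs_singleton.
  apply: hF0; exists [:: a n], z; split; last by rewrite big_seq1.
  by move=> y; rewrite inE => /eqP ->; split.
Qed.
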